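(* **Setting.** For $j=1,\dots,J$, let: - $P_{j-1}$ be an $n\times r_{j-1}$ basis matrix; - $P_{j,\mathrm{new}}$ an $n\times c_{j,\mathrm{new}}$ basis matrix with $P_{j,\mathrm{new}}'P_{j-1}=0$; - $\hat P_{j-1}$ an $n\times r_{j-1}$ basis matrix; - $\hat P_{j,\mathrm{new},k}$ ($k=1,\dots,K$) an $n\times c_{j,\mathrm{new}}$ basis matrix with $\hat P_{j,\mathrm{new},k}'\hat P_{j-1}=0$. **Quantities.** - $\kappa_{s,*}:=\max_j\kappa_s(P_{j-1})$ and $\kappa_{s,\mathrm{new}}:=\max_j\kappa_s(P_{j,\mathrm{new}})$. - $\tilde\kappa_{s,k}:=\max_j\kappa_s\big((I-P_{j,\mathrm{new}}P_{j,\mathrm{new}}')\hat P_{j,\mathrm{new},k}\big)$. Fix $j$ and $k$, and write $P_*:=P_{j-1}$, $\hat P_*:=\hat P_{j-1}$, $P_{\mathrm{new}}:=P_{j,\mathrm{new}}$ and $\hat P_{\mathrm{new},k}:=\hat P_{j,\mathrm{new},k}$. Define - $\zeta_*:=\|(I-\hat P_*\hat P_*')P_*\|_2$; - $\zeta_k:=\|(I-\hat P_*\hat P_*'-\hat P_{\mathrm{new},k}\hat P_{\mathrm{new},k}')P_{\mathrm{new}}\|_2$; - $\Phi_0:=I-\hat P_*\hat P_*'$ and $\Phi_k:=I-\hat P_*\hat P_*'-\hat P_{\mathrm{new},k}\hat P_{\mathrm{new},k}'$. **Claims.** The following hold. 1. If a basis matrix $P$ can be split as $P=[P_1,P_2]$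 with $P_1,P_2$ basis matrices, then $\kappa_s^2(P)=\max_{|T|\le s}\|I_T'P\|_2^2\le\kappa_s^2(P_1)+\kappa_s^2(P_2)$. 2. $\kappa_s^2(\hat P_* )\le\kappa_{s,*}^2+2\zeta_*$. 3. $\kappa_s(\hat P_{\mathrm{new},k})\le\kappa_{s,\mathrm{new}}+\tilde\kappa_{s,k}\zeta_k+\zeta_*$. 4. $\delta_s(\Phi_0)=\kappa_s^2(\hat P_* )\le\kappa_{s,*}^2+2\zeta_*$. 5. For $k\ge1$, $\delta_s(\Phi_k)=\kappa_s^2([\hat P_*\ \hat P_{\mathrm{new},k}])\le\kappa_s^2(\hat P_* )+\kappa_s^2(\hat P_{\mathrm{new},k})\le\kappa_{s,*}^2+2\zeta_*+(\kappa_{s,\mathrm{new}}+\tilde\kappa_{s,k}\zeta_k+\zeta_* )^2$.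
   Context: A basis matrix is a real matrix $P$ with $P'P=I$. $\mathrm{basis}(B)$ is a basis matrix with the same column span as $B$. $I_T$ is the submatrix of the $n\times n$ identity with columns in $T\subseteq\{1,\dots,n\}$, and $\Psi_T:=\Psi I_T$. The denseness coefficient is $\kappa_s(B):=\max_{|T|\le s}\|I_T'\mathrm{basis}(B)\|_2$. The $s$-restricted isometry constant $\delta_s(\Psi)$ is the smallest $\delta$ with $(1-\delta)\|x\|_2^2\le\|\Psi_Tx\|_2^2\le(1+\delta)\|x\|_2^2$ for all $|T|\le s$ and all $x$. *)

(* Defs.v *)
From HB Require Import structures.
From mathcomp Require Import all_boot all_order all_algebra.
From mathcomp Require Import classical_sets reals.
Set Implicit Arguments. Unset Strict Implicit. Unset Printing Implicit Defensive.
Import Order.TTheory GRing.Theory Num.Theory.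
Local Open Scope ring_scope.
Local Open Scope classical_set_scope.

Section Defs.
Variable R : realType.

Definition vnorm (m : nat) (x : 'cV[R]_m) : R := Num.sqrt (\sum_i x i 0 ^+ 2).

Definition opnorm (p q : nat) (A : 'M[R]_(p, q)) : R :=
  sup [set vnorm (A *m x) | x in [set x : 'cV[R]_q | vnorm x = 1]].

Definition basis_matrix (p q : nat) (P : 'M[R]_(p, q)) : Prop := P^T *m P = 1%:M.

Definition basis_of (p q m : nat) (P : 'M[R]_(p, m)) (B : 'M[R]_(p, q)) : Prop :=
  basis_matrix P /\ (P^T == B^T)%MS.

Definition I_T (n : nat) (T : {set 'I_n}) : 'M[R]_(n, #|T|) :=
  \matrix_(i < n, j < #|T|) (i == enum_val j)%:R.

Definition kappa_of (s n m : nat) (P : 'M[R]_(n, m)) : R :=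
  \big[Num.max/0]_(T : {set 'I_n} | (#|T| <= s)%N) opnorm ((I_T T)^T *m P).

(* denseness coefficient kappa_s(B) := max_{|T|<=s} ||I_T' basis(B)||_2.
   basis(B) is any basis matrix (with \rank B columns) of the column span of B;
   the value does not depend on the choice, so we take the sup over all choices. *)
Definition kappa (s n m : nat) (B : 'M[R]_(n, m)) : R :=
  sup [set kappa_of s P | P in [set P : 'M[R]_(n, \rank B) | basis_of P B]].

Definition delta (s n m : nat) (Psi : 'M[R]_(m, n)) : R :=
  inf [set d : R | forall T : {set 'I_n}, (#|T| <= s)%N ->
         forall x : 'cV[R]_#|T|,
           (1 - d) * vnorm x ^+ 2 <= vnorm ((Psi *m I_T T) *m x) ^+ 2 /\
           vnorm ((Psi *m I_T T) *m x) ^+ 2 <= (1 + d) * vnorm x ^+ 2].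

End Defs.

(* Main.v *)
Require Import Defs.
From HB Require Import structures.
From mathcomp Require Import all_boot all_order all_algebra.
From mathcomp Require Import boolp classical_sets reals.
From mathcomp Require Import ring lra.
Set Implicit Arguments. Unset Strict Implicit. Unset Printing Implicit Defensive.
Import Order.TTheory GRing.Theory Num.Theory.
Local Open Scope ring_scope.
Section Aux1.
Variable R : realType.

Definition dot (m : nat) (u v : 'cV[R]_m) : R := (u^T *m v) 0 0.
Definition nsq m (v : 'cV[R]_m) := dot v v.

Lemma dotE m (u v : 'cV[R]_m) : dot u v = \sum_i u i 0 * v i 0.
Proof. by rewrite /dot mxE; apply: eq_bigr => i _; rewrite mxE. Qed.

Lemma nsqE m (v : 'cV[R]_m) : nsq v = \sum_i v i 0 ^+ 2.
Proof. by rewrite /nsq dotE; apply: eq_bigr => i _; rewrite expr2. Qed.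

Lemma nsq_ge0 m (v : 'cV[R]_m) : 0 <= nsq v.
Proof. by rewrite nsqE; apply: sumr_ge0 => i _; exact: sqr_ge0. Qed.

Lemma nsq_eq0 m (v : 'cV[R]_m) : nsq v = 0 -> v = 0.
Proof.
rewrite nsqE => /psumr_eq0P H; apply/matrixP => i j; rewrite (ord1 j) mxE.
by apply/eqP; rewrite -sqrf_eq0; apply/eqP; apply: H => // k _; exact: sqr_ge0.
Qed.

Lemma vnormE m (v : 'cV[R]_m) : vnorm v = Num.sqrt (nsq v).
Proof. by rewrite /vnorm nsqE. Qed.

Lemma vnorm_sq m (v : 'cV[R]_m) : vnorm v ^+ 2 = nsq v.
Proof. by rewrite vnormE sqr_sqrtr // nsq_ge0. Qed.

Lemma vnorm_ge0 m (v : 'cV[R]_m) : 0 <= vnorm v.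
Proof. by rewrite vnormE sqrtr_ge0. Qed.

Lemma dotC m (u v : 'cV[R]_m) : dot u v = dot v u.
Proof. by rewrite !dotE; apply: eq_bigr => i _; rewrite mulrC. Qed.

Lemma dotDr m (u v w : 'cV[R]_m) : dot u (v + w) = dot u v + dot u w.
Proof. by rewrite /dot mulmxDr mxE. Qed.

Lemma dotZr m a (u v : 'cV[R]_m) : dot u (a *: v) = a * dot u v.
Proof. by rewrite /dot -scalemxAr mxE. Qed.

Lemma dotNr m (u v : 'cV[R]_m) : dot u (- v) = - dot u v.
Proof. by rewrite -scaleN1r dotZr mulN1r. Qed.

Lemma dotBr m (u v w : 'cV[R]_m) : dot u (v - w) = dot u v - dot u w.
Proof. by rewrite dotDr dotNr. Qed.

Lemma dotDl m (u v w : 'cV[R]_m) : dot (v + w) u = dot v u + dot w u.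
Proof. by rewrite dotC dotDr !(dotC u). Qed.

Lemma dotZl m a (u v : 'cV[R]_m) : dot (a *: v) u = a * dot v u.
Proof. by rewrite dotC dotZr dotC. Qed.

Lemma dotBl m (u v w : 'cV[R]_m) : dot (v - w) u = dot v u - dot w u.
Proof. by rewrite dotC dotBr !(dotC u). Qed.

Lemma dot0r m (u : 'cV[R]_m) : dot u 0 = 0.
Proof. by rewrite /dot mulmx0 mxE. Qed.

Lemma dot_mulmx p q (M : 'M[R]_(p, q)) u v : dot u (M *m v) = dot (M^T *m u) v.
Proof. by rewrite /dot trmx_mul trmxK mulmxA. Qed.

Lemma dot_CS m (u v : 'cV[R]_m) : dot u v ^+ 2 <= nsq u * nsq v.
Proof.
have H : 0 <= nsq (nsq v *: u - dot u v *: v) := nsq_ge0 _.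
have E : nsq (nsq v *: u - dot u v *: v) =
         nsq v * (nsq v * nsq u - dot u v ^+ 2).
  rewrite /nsq !(dotBl, dotBr, dotZl, dotZr) [dot v u]dotC; ring.
rewrite E in H.
have [v0|vn0] := eqVneq (nsq v) 0.
  by rewrite v0 (nsq_eq0 v0) dot0r expr0n mulr0.
have vp : 0 < nsq v by rewrite lt_def vn0 nsq_ge0.
rewrite pmulr_rge0 // in H; rewrite mulrC; lra.
Qed.

Lemma dot_le_vnorm m (u v : 'cV[R]_m) : dot u v <= vnorm u * vnorm v.
Proof.
apply: (le_trans (ler_norm _)); rewrite -sqrtr_sqr !vnormE -sqrtrM ?nsq_ge0 //.
by rewrite ler_sqrt ?dot_CS // mulr_ge0 ?nsq_ge0.
Qed.

Lemma vnormD m (u v : 'cV[R]_m) : vnorm (u + v) <= vnorm u + vnorm v.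
Proof.
rewrite [vnorm (u+v)]vnormE -[vnorm u + vnorm v]ger0_norm ?addr_ge0 ?vnorm_ge0 //.
rewrite -sqrtr_sqr ler_sqrt ?sqr_ge0 //.
have := dot_le_vnorm u v.
rewrite /nsq !(dotDl, dotDr) [dot v u]dotC.
have := vnorm_sq u; have := vnorm_sq v; rewrite /nsq => <- <-.
move=> h; rewrite sqrrD; lra.
Qed.

Lemma nsqZ m a (v : 'cV[R]_m) : nsq (a *: v) = a ^+ 2 * nsq v.
Proof. by rewrite /nsq dotZl dotZr mulrA expr2. Qed.

Lemma vnormZ m a (v : 'cV[R]_m) : vnorm (a *: v) = `|a| * vnorm v.
Proof. by rewrite !vnormE nsqZ sqrtrM ?sqr_ge0 // sqrtr_sqr. Qed.

Lemma vnorm_eq0 m (v : 'cV[R]_m) : vnorm v = 0 -> v = 0.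
Proof.
move=> h; apply: nsq_eq0; by rewrite -vnorm_sq h expr0n.
Qed.

Lemma vnorm0 m : vnorm (0 : 'cV[R]_m) = 0.
Proof. by rewrite vnormE /nsq dot0r sqrtr0. Qed.

Definition frob p q (M : 'M[R]_(p, q)) := \sum_i \sum_j M i j ^+ 2.

Lemma nsq_mul_le p q (M : 'M[R]_(p, q)) x : nsq (M *m x) <= frob M * nsq x.
Proof.
rewrite nsqE /frob mulr_suml; apply: ler_sum => i _.
pose w : 'cV[R]_q := \col_j M i j.
have -> : (M *m x) i 0 = dot w x by rewrite dotE mxE; apply: eq_bigr => j _; rewrite mxE.
have -> : \sum_j M i j ^+ 2 = nsq w by rewrite nsqE; apply: eq_bigr => j _; rewrite mxE.
exact: dot_CS.
Qed.

Lemma frob_ge0 p q (M : 'M[R]_(p, q)) : 0 <= frob M.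
Proof. by apply: sumr_ge0 => i _; apply: sumr_ge0 => j _; exact: sqr_ge0. Qed.

End Aux1.
Section Aux2.
Variable R : realType.
Local Open Scope classical_set_scope.

Definition opset p q (A : 'M[R]_(p,q)) :=
  [set vnorm (A *m x) | x in [set x : 'cV[R]_q | vnorm x = 1]].

Lemma opnormE p q (A : 'M[R]_(p,q)) : opnorm A = sup (opset A).
Proof. by []. Qed.

Lemma opset_ub p q (A : 'M[R]_(p,q)) : has_ubound (opset A).
Proof.
exists (Num.sqrt (frob A)) => y [x /= hx <-].
rewrite vnormE ler_sqrt ?frob_ge0 //.
by have := nsq_mul_le A x; rewrite -(vnorm_sq x) hx expr1n mulr1.
Qed.

Lemma opnorm_ge0 p q (A : 'M[R]_(p,q)) : 0 <= opnorm A.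
Proof.
rewrite opnormE; case: (pselect (opset A !=set0)) => [[y Hy]|e].
  apply: le_trans (ub_le_sup (opset_ub A) Hy).
  by case: Hy => x _ <-; exact: vnorm_ge0.
have -> : opset A = set0.
  by apply/seteqP; split => y // Hy; exfalso; apply: e; exists y.
by rewrite sup0.
Qed.

Lemma opnorm_le p q (A : 'M[R]_(p,q)) x : vnorm (A *m x) <= opnorm A * vnorm x.
Proof.
have [x0|xn0] := eqVneq (vnorm x) 0.
  by rewrite (vnorm_eq0 x0) mulmx0 vnorm0 vnorm0 mulr0.
have xp : 0 < vnorm x by rewrite lt_def xn0 vnorm_ge0.
have Hy : opset A (vnorm (A *m ((vnorm x)^-1 *: x))).
  exists ((vnorm x)^-1 *: x) => //=.
  by rewrite vnormZ ger0_norm ?invr_ge0 ?vnorm_ge0 // mulVf.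
have := ub_le_sup (opset_ub A) Hy.
rewrite -scalemxAr vnormZ ger0_norm ?invr_ge0 ?vnorm_ge0 // -opnormE.
by rewrite ler_pdivrMl // mulrC.
Qed.

Lemma opnorm_leP p q (A : 'M[R]_(p,q)) c : 0 <= c ->
  (forall x, vnorm (A *m x) <= c * vnorm x) -> opnorm A <= c.
Proof.
move=> c0 H; rewrite opnormE.
case: (pselect (opset A !=set0)) => [ne|e].
  by apply: ge_sup => // y [x /= hx <-]; have := H x; rewrite hx mulr1.
have -> : opset A = set0.
  by apply/seteqP; split => y // Hy; exfalso; apply: e; exists y.
by rewrite sup0.
Qed.

Lemma opnorm_sq_le p q (A : 'M[R]_(p,q)) x :
  nsq (A *m x) <= opnorm A ^+ 2 * nsq x.
Proof.
rewrite -!vnorm_sq -exprMn; have := opnorm_le A x; have := vnorm_ge0 (A *m x).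
move=> h1 h2; nra.
Qed.

Lemma opnorm_sq_leP p q (A : 'M[R]_(p,q)) c : 0 <= c ->
  (forall x, nsq (A *m x) <= c * nsq x) -> opnorm A ^+ 2 <= c.
Proof.
move=> c0 H.
have : opnorm A <= Num.sqrt c.
  apply: opnorm_leP; first exact: sqrtr_ge0.
  by move=> x; rewrite !vnormE -sqrtrM // ler_sqrt ?mulr_ge0 ?nsq_ge0.
move=> h; rewrite -(sqr_sqrtr c0); have := opnorm_ge0 A; nra.
Qed.

Lemma tr_bound p q (M : 'M[R]_(p,q)) c : 0 <= c ->
  (forall z, nsq (M *m z) <= c * nsq z) -> forall w, nsq (M^T *m w) <= c * nsq w.
Proof.
move=> c0 H w; set y := M^T *m w.
have E : nsq y = dot w (M *m y) by rewrite dot_mulmx.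
have h1 := dot_CS w (M *m y); rewrite -E in h1.
have h2 := H y.
have h3 := nsq_ge0 w.
have [y0|yn0] := eqVneq (nsq y) 0; first by rewrite y0 mulr_ge0.
have yp : 0 < nsq y by rewrite lt_def yn0 nsq_ge0.
have h5 : nsq w * nsq (M *m y) <= nsq w * (c * nsq y) by rewrite ler_wpM2l.
have h6 : nsq y * nsq y <= nsq y * (c * nsq w).
  rewrite -expr2; apply: le_trans h1 (le_trans h5 _); rewrite le_eqVlt; apply/orP; left; apply/eqP; ring.
by rewrite ler_pM2l in h6.
Qed.

Lemma opnorm_tr_le p q (M : 'M[R]_(p,q)) : opnorm M^T <= opnorm M.
Proof.
have h : opnorm M^T ^+ 2 <= opnorm M ^+ 2.
  apply: opnorm_sq_leP; first exact: sqr_ge0.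
  by apply: tr_bound; [exact: sqr_ge0| exact: opnorm_sq_le].
have := opnorm_ge0 M; have := opnorm_ge0 M^T; nra.
Qed.

Lemma opnorm_tr p q (M : 'M[R]_(p,q)) : opnorm M^T = opnorm M.
Proof.
apply/eqP; rewrite eq_le opnorm_tr_le /=.
by have := opnorm_tr_le M^T; rewrite trmxK.
Qed.

Lemma opnorm_mul_le p q r (A : 'M[R]_(p,q)) (B : 'M[R]_(q,r)) :
  opnorm (A *m B) <= opnorm A * opnorm B.
Proof.
apply: opnorm_leP; first by rewrite mulr_ge0 ?opnorm_ge0.
move=> x; rewrite -mulmxA; apply: le_trans (opnorm_le A _) _.
by rewrite -mulrA ler_wpM2l ?opnorm_ge0 ?opnorm_le.
Qed.

End Aux2.
Section Aux3.
Variable R : realType.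

Lemma I_T_tr_mul n (T : {set 'I_n}) : (I_T R T)^T *m I_T R T = 1%:M.
Proof.
apply/matrixP => j k; rewrite mxE [RHS]mxE; under eq_bigr do rewrite !mxE.
rewrite (bigD1 (enum_val j)) //= eqxx mul1r big1 ?addr0; last first.
  by move=> i /negbTE ->; rewrite mul0r.
by rewrite (inj_eq enum_val_inj).
Qed.

Lemma basis_nsq n m (P : 'M[R]_(n,m)) x : basis_matrix P -> nsq (P *m x) = nsq x.
Proof. by move=> hP; rewrite /nsq dot_mulmx mulmxA hP mul1mx. Qed.

Lemma I_T_basis n (T : {set 'I_n}) : basis_matrix (I_T R T).
Proof. exact: I_T_tr_mul. Qed.

Lemma nsq_proj n m (P : 'M[R]_(n,m)) v : basis_matrix P ->
  nsq ((1%:M - P *m P^T) *m v) = nsq v - nsq (P^T *m v).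
Proof.
move=> hP; rewrite mulmxBl mul1mx -mulmxA.
have e1 : dot v (P *m (P^T *m v)) = dot (P^T *m v) (P^T *m v) by rewrite dot_mulmx.
have e2 : dot (P *m (P^T *m v)) (P *m (P^T *m v)) = dot (P^T *m v) (P^T *m v).
  exact: basis_nsq.
rewrite /nsq !(dotBl, dotBr) [dot (P *m _) v]dotC e1 e2; ring.
Qed.

Lemma basis_tr_nsq n m (P : 'M[R]_(n,m)) v : basis_matrix P ->
  nsq (P^T *m v) <= nsq v.
Proof.
move=> hP; have := nsq_ge0 ((1%:M - P *m P^T) *m v); rewrite nsq_proj //.
by rewrite subr_ge0.
Qed.

Lemma opnorm_basis_tr n m (P : 'M[R]_(n,m)) : basis_matrix P -> opnorm P^T <= 1.
Proof.
move=> hP; have h : opnorm P^T ^+ 2 <= 1.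
  by apply: opnorm_sq_leP => // x; rewrite mul1r basis_tr_nsq.
have := opnorm_ge0 P^T; nra.
Qed.

Lemma opnorm_basis n m (P : 'M[R]_(n,m)) : basis_matrix P -> opnorm P <= 1.
Proof. by move=> hP; rewrite -opnorm_tr opnorm_basis_tr. Qed.

Lemma lower_tr r (A : 'M[R]_r) t :
  (forall y, t * nsq y <= nsq (A^T *m y)) -> forall x, t * nsq x <= nsq (A *m x).
Proof.
move=> H x.
have [tle|tgt] := leP t 0.
  by apply: le_trans (nsq_ge0 _); rewrite mulr_le0_ge0 ?nsq_ge0.
have Au : A \in unitmx.
  rewrite unitmxE unitfE; apply/negP => /det0P [v vn0 vA].
  have : t * nsq v^T <= nsq (A^T *m v^T) := H v^T.
  rewrite -trmx_mul vA trmx0 /nsq dot0r.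
  have vp : 0 < nsq v^T.
    rewrite lt_def nsq_ge0 andbT; apply/negP => /eqP /nsq_eq0 /eqP.
    by rewrite -(inj_eq (@trmx_inj _ _ _)) trmxK trmx0 (negbTE vn0).
  rewrite /nsq in vp; nra.
have Atu : A^T \in unitmx by rewrite unitmx_tr.
pose B := invmx A^T.
have HB : forall z, nsq (B *m z) <= t^-1 * nsq z.
  move=> z; have := H (B *m z); rewrite mulmxA mulmxV // mul1mx.
  by rewrite ler_pdivlMl.
have ti0 : 0 <= t^-1 by rewrite invr_ge0 ltW.
have := tr_bound ti0 HB (A *m x).
rewrite /B trmx_inv trmxK mulmxA mulVmx // mul1mx.
by rewrite ler_pdivlMl.
Qed.

Lemma sin_le n r (P Q : 'M[R]_(n,r)) : basis_matrix P -> basis_matrix Q ->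
  opnorm ((1%:M - P *m P^T) *m Q) <= opnorm ((1%:M - Q *m Q^T) *m P).
Proof.
move=> hP hQ; set z := opnorm ((1%:M - Q *m Q^T) *m P).
have z0 : 0 <= z := opnorm_ge0 _.
pose A := P^T *m Q.
have F1 : forall y, (1 - z ^+ 2) * nsq y <= nsq (A^T *m y).
  move=> y; have := opnorm_sq_le ((1%:M - Q *m Q^T) *m P) y.
  rewrite -mulmxA nsq_proj // basis_nsq // mulmxA -/z /A trmx_mul trmxK.
  move=> h; nra.
have F2 := lower_tr F1.
have h : opnorm ((1%:M - P *m P^T) *m Q) ^+ 2 <= z ^+ 2.
  apply: opnorm_sq_leP; first exact: sqr_ge0.
  move=> x; rewrite -mulmxA nsq_proj // basis_nsq //; have := F2 x.
  rewrite /A mulmxA => h; nra.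
have := opnorm_ge0 ((1%:M - P *m P^T) *m Q); nra.
Qed.

End Aux3.
Section Aux4.
Variable R : realType.

Lemma col_subl m1 m2 n (a : 'M[R]_(m1,n)) (A : 'M[R]_(m2,n)) : (a <= col_mx a A)%MS.
Proof. by rewrite -addsmxE addsmxSl. Qed.

Lemma col_subr m1 m2 n (a : 'M[R]_(m1,n)) (A : 'M[R]_(m2,n)) : (A <= col_mx a A)%MS.
Proof. by rewrite -addsmxE addsmxSr. Qed.

Lemma gs_rows m n (A : 'M[R]_(m, n)) :
  exists k (Q : 'M[R]_(k, n)), Q *m Q^T = 1%:M /\ (Q == A)%MS.
Proof.
elim: m A => [|m IH] A.
  exists 0%N, 0; split; first by apply/matrixP => i; case: i.
  by rewrite [A]flatmx0 !submx_refl.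
suff step : forall A' : 'M[R]_(1 + m, n),
    exists k (Q : 'M[R]_(k, n)), Q *m Q^T = 1%:M /\ (Q == A')%MS by exact: step A.
move=> {}A.
pose a : 'M[R]_(1, n) := usubmx (A : 'M_(1 + m, n)).
pose A1 : 'M[R]_(m, n) := dsubmx (A : 'M_(1 + m, n)).
have eA : A = col_mx a A1 by rewrite vsubmxK.
rewrite eA; have [k [Q1 [hQ1 eQ1]]] := IH A1.
have Q1A1 : (Q1 <= A1)%MS by case/andP: eQ1.
have A1Q1 : (A1 <= Q1)%MS by case/andP: eQ1.
have Q1c : (Q1 <= col_mx a A1)%MS := submx_trans Q1A1 (col_subr _ _).
pose v := a - a *m Q1^T *m Q1.
have vc : (v <= col_mx a A1)%MS.
  rewrite /v -scaleN1r addmx_sub ?scalemx_sub ?col_subl //.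
  exact: submx_trans (submxMl _ _) Q1c.
have [v0|vn0] := eqVneq v 0.
  exists k, Q1; split => //; apply/andP; split => //.
  rewrite col_mx_sub A1Q1 andbT.
  have -> : a = a *m Q1^T *m Q1 by apply/eqP; rewrite -subr_eq0 -/v v0.
  exact: submxMl.
pose nv := (v *m v^T) 0 0.
have nvE : nv = nsq v^T by rewrite /nv /nsq /dot trmxK.
have nvp : 0 < nv.
  rewrite nvE lt_def nsq_ge0 andbT; apply/negP => /eqP /nsq_eq0 /eqP.
  by rewrite -(inj_eq (@trmx_inj _ _ _)) trmxK trmx0 (negbTE vn0).
pose c := (Num.sqrt nv)^-1.
have sp : 0 < Num.sqrt nv by rewrite sqrtr_gt0.
pose q := c *: v.
have Q1v : Q1 *m v^T = 0.
  rewrite /v linearB /= !trmx_mul !trmxK mulmxBr.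
  by rewrite !mulmxA hQ1 mul1mx subrr.
exists (k + 1)%N, (col_mx Q1 q); split.
  rewrite tr_col_mx mul_col_row hQ1 /q linearZ /= -scalemxAr Q1v scaler0.
  have -> : (c *: v) *m Q1^T = 0.
    by rewrite -scalemxAl -(trmxK (v *m Q1^T)) trmx_mul trmxK Q1v trmx0 scaler0.
  have -> : (c *: v) *m (c *: v^T) = 1%:M.
    rewrite -scalemxAr -scalemxAl scalerA; apply/matrixP => i j.
    rewrite !ord1 [LHS]mxE [RHS]mxE eqxx mulr1n -/nv /c -expr2 exprVn.
    by rewrite sqr_sqrtr ?ltW // mulVf ?gt_eqF.
  by rewrite -scalar_mx_block.
apply/andP; split.
  by rewrite col_mx_sub Q1c /q scalemx_sub.
rewrite col_mx_sub; apply/andP; split; last first.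
  exact: submx_trans A1Q1 (col_subl _ _).
have -> : a = Num.sqrt nv *: q + (a *m Q1^T) *m Q1.
  by rewrite /q /c scalerA mulfV ?gt_eqF // scale1r /v subrK.
apply: addmx_sub; first by apply: scalemx_sub; exact: col_subr.
exact: submx_trans (submxMl _ _) (col_subl _ _).
Qed.

Lemma basis_exists n m (B : 'M[R]_(n,m)) :
  exists Q : 'M[R]_(n, \rank B), Defs.basis_of Q B.
Proof.
have [k [Q [hQ eQ]]] := gs_rows B^T.
have ek : k = \rank B.
  rewrite -(mxrank_tr B) -(eqmx_rank eQ).
  apply/eqP; rewrite eqn_leq rank_leq_row /=.
  by have := mxrankM_maxl Q Q^T; rewrite hQ mxrank1 andbT.
subst k; exists (trmx Q); split; last by rewrite trmxK.
by rewrite /basis_matrix trmxK.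
Qed.

End Aux4.
Section Aux5.
Variable R : realType.
Local Open Scope classical_set_scope.

Lemma proj_sub n m k (P : 'M[R]_(n,m)) (Q : 'M[R]_(n,k)) : basis_matrix P ->
  (Q^T <= P^T)%MS -> Q = P *m (P^T *m Q).
Proof.
move=> hP /submxP [D eD].
have -> : Q = P *m D^T by rewrite -(trmxK Q) eD trmx_mul trmxK.
by rewrite [P^T *m _]mulmxA hP mul1mx.
Qed.

Lemma opnorm_same_span n m k p (M : 'M[R]_(p,n)) (P : 'M[R]_(n,m)) (Q : 'M[R]_(n,k)) :
  basis_matrix P -> basis_matrix Q -> (Q^T <= P^T)%MS -> (P^T <= Q^T)%MS ->
  opnorm (M *m P) = opnorm (M *m Q).
Proof.
move=> hP hQ sQP sPQ.
have aux : forall m1 m2 (X : 'M[R]_(n,m1)) (Y : 'M[R]_(n,m2)),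
    basis_matrix X -> basis_matrix Y -> (Y^T <= X^T)%MS ->
    opnorm (M *m Y) <= opnorm (M *m X).
  move=> m1 m2 X Y hX hY sYX; rewrite {1}(proj_sub hX sYX) mulmxA.
  apply: le_trans (opnorm_mul_le _ _) _.
  rewrite -[X in _ <= X]mulr1 ler_wpM2l ?opnorm_ge0 //.
  apply: le_trans (opnorm_mul_le _ _) _.
  rewrite -[1]mulr1 ler_pM ?opnorm_ge0 ?opnorm_basis_tr ?opnorm_basis //.
by apply/eqP; rewrite eq_le !aux.
Qed.

Lemma kappa_of_ge0 s n m (P : 'M[R]_(n,m)) : 0 <= kappa_of s P.
Proof.
rewrite /kappa_of; elim/big_ind: _ => //[x y hx hy|T _].
  by rewrite le_max hx.
exact: opnorm_ge0.
Qed.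

Lemma kappa_of_ge s n m (P : 'M[R]_(n,m)) (T : {set 'I_n}) : (#|T| <= s)%N ->
  opnorm ((I_T R T)^T *m P) <= kappa_of s P.
Proof. by move=> hT; rewrite /kappa_of; apply: le_bigmax_cond. Qed.

Lemma kappa_of_le s n m (P : 'M[R]_(n,m)) c : 0 <= c ->
  (forall T : {set 'I_n}, (#|T| <= s)%N -> opnorm ((I_T R T)^T *m P) <= c) ->
  kappa_of s P <= c.
Proof. by move=> c0 H; apply: bigmax_le. Qed.

Lemma kappa_of_same s n m k (P : 'M[R]_(n,m)) (Q : 'M[R]_(n,k)) :
  basis_matrix P -> basis_matrix Q -> (Q^T <= P^T)%MS -> (P^T <= Q^T)%MS ->
  kappa_of s P = kappa_of s Q.
Proof. by move=> *; apply: eq_bigr => T _; apply: opnorm_same_span. Qed.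

Lemma kappa_basis_of s n m (B : 'M[R]_(n,m)) (Q : 'M[R]_(n, \rank B)) :
  Defs.basis_of Q B -> kappa s B = kappa_of s Q.
Proof.
move=> [hQ eQ]; rewrite /kappa.
have -> : [set kappa_of s P | P in [set P : 'M[R]_(n, \rank B) | Defs.basis_of P B]]
          = [set kappa_of s Q].
  apply/seteqP; split => x.
    case=> P [hP eP] <- /=.
    case/andP: eP => p1 p2; case/andP: eQ => q1 q2.
    apply: kappa_of_same => //; exact: submx_trans _ q2 || exact: submx_trans _ p2.
  by move=> ->; exists Q.
by rewrite sup1.
Qed.

Lemma kappa_basis s n m (P : 'M[R]_(n,m)) : basis_matrix P -> kappa s P = kappa_of s P.
Proof.
move=> hP; have [Q hQ] := basis_exists P; rewrite (kappa_basis_of s hQ).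
by case: hQ => hQ /andP [s1 s2]; apply: kappa_of_same.
Qed.

Lemma kappa_of_basis_le1 s n m (Q : 'M[R]_(n,m)) : basis_matrix Q -> kappa_of s Q <= 1.
Proof.
move=> hQ; apply: kappa_of_le => // T _.
apply: le_trans (opnorm_mul_le _ _) _.
rewrite -[1]mulr1; apply: ler_pM; [exact: opnorm_ge0|exact: opnorm_ge0| |exact: opnorm_basis].
exact: opnorm_basis_tr (I_T_basis _ _).
Qed.

Lemma kappa_ge0 s n m (B : 'M[R]_(n,m)) : 0 <= kappa s B.
Proof. by have [Q hQ] := basis_exists B; rewrite (kappa_basis_of s hQ) kappa_of_ge0. Qed.

Lemma kappa_le1 s n m (B : 'M[R]_(n,m)) : kappa s B <= 1.
Proof.
have [Q hQ] := basis_exists B; rewrite (kappa_basis_of s hQ).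
by case: hQ => hQ _; apply: kappa_of_basis_le1.
Qed.

Lemma kappa_gen s n m (B : 'M[R]_(n,m)) (T : {set 'I_n}) : (#|T| <= s)%N ->
  opnorm ((I_T R T)^T *m B) <= kappa s B * opnorm B.
Proof.
move=> hT; have [Q hQ] := basis_exists B; rewrite (kappa_basis_of s hQ).
case: hQ => hQ /andP [s1 s2].
have eB : B = Q *m (Q^T *m B) by apply: proj_sub.
rewrite {1}eB mulmxA; apply: le_trans (opnorm_mul_le _ _) _.
apply: ler_pM; [exact: opnorm_ge0 | exact: opnorm_ge0 | exact: kappa_of_ge |].
apply: le_trans (opnorm_mul_le _ _) _.
rewrite -[X in _ <= X]mul1r ler_wpM2r ?opnorm_ge0 // opnorm_basis_tr //.
Qed.

End Aux5.
Section Aux6.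
Variable R : realType.
Local Open Scope classical_set_scope.

Lemma maxsq (a b : R) : 0 <= a -> 0 <= b -> Num.max a b ^+ 2 = Num.max (a ^+ 2) (b ^+ 2).
Proof.
move=> a0 b0; rewrite !maxEle.
have [hab|hab] := leP a b; have [h2|h2] := leP (a ^+ 2) (b ^+ 2) => //; exfalso; nra.
Qed.

Lemma bigmax_sq (I : finType) (P : pred I) (F : I -> R) : (forall i, 0 <= F i) ->
  (\big[Num.max/0]_(i | P i) F i) ^+ 2 = \big[Num.max/0]_(i | P i) F i ^+ 2.
Proof.
move=> F0.
suff : 0 <= \big[Num.max/0]_(i | P i) F i /\
       (\big[Num.max/0]_(i | P i) F i) ^+ 2 = \big[Num.max/0]_(i | P i) F i ^+ 2.
  by case.
elim/big_rec2: _ => [|i y1 y2 _ [h1 <-]]; first by rewrite expr0n.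
split; first by rewrite le_max h1 orbT.
exact: maxsq.
Qed.

Lemma kappa_of_sq s n m (P : 'M[R]_(n,m)) :
  kappa_of s P ^+ 2 = \big[Num.max/0]_(T : {set 'I_n} | (#|T| <= s)%N)
                         opnorm ((I_T R T)^T *m P) ^+ 2.
Proof. by rewrite /kappa_of bigmax_sq // => T; exact: opnorm_ge0. Qed.

Lemma nsq_dim0 k (v : 'cV[R]_k) : k = 0%N -> nsq v = 0.
Proof. by move=> hk; rewrite nsqE big1 // => -[i hi] _; exfalso; rewrite hk in hi. Qed.

Lemma vnorm_dim0 k (v : 'cV[R]_k) : k = 0%N -> vnorm v = 0.
Proof. by move=> hk; rewrite vnormE nsq_dim0 ?sqrtr0. Qed.

Lemma opnorm_dim0 p q (M : 'M[R]_(p,q)) : p = 0%N -> opnorm M = 0.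
Proof.
move=> hp; apply/eqP; rewrite eq_le opnorm_ge0 andbT.
by apply: opnorm_leP => // x; rewrite vnorm_dim0 // mul0r.
Qed.

Lemma delta_proj s n m (W : 'M[R]_(n,m)) : basis_matrix W ->
  delta s (1%:M - W *m W^T) = kappa_of s W ^+ 2.
Proof.
move=> hW; rewrite /delta; set S := (X in inf X).
have key : forall T x, vnorm ((1%:M - W *m W^T) *m I_T R T *m x) ^+ 2
                    = nsq x - nsq (((I_T R T)^T *m W)^T *m x).
  move=> T x; rewrite vnorm_sq -mulmxA nsq_proj // (basis_nsq x (I_T_basis R T)).
  by rewrite trmx_mul trmxK mulmxA.
set d0 := kappa_of s W ^+ 2.
have d00 : 0 <= d0 by rewrite /d0 sqr_ge0.
have Sd0 : S d0.
  move=> T hT x; rewrite key !vnorm_sq.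
  have h1 : nsq (((I_T R T)^T *m W)^T *m x) <= d0 * nsq x.
    apply: le_trans (opnorm_sq_le _ _) _; rewrite opnorm_tr.
    apply: ler_wpM2r; first exact: nsq_ge0.
    have := kappa_of_ge W hT; have := opnorm_ge0 ((I_T R T)^T *m W); rewrite /d0; nra.
  have := nsq_ge0 (((I_T R T)^T *m W)^T *m x); have := nsq_ge0 x; split; nra.
case: (pselect (exists T : {set 'I_n}, (0 < #|T| <= s)%N)) => [[T0 /andP [T0p T0s]]|noT].
  have lb : lbound S d0.
    move=> d Sd.
    have dpos : 0 <= d.
      pose x : 'cV[R]_#|T0| := const_mx 1.
      have xp : 0 < nsq x.
        rewrite nsqE (bigD1 (Ordinal T0p)) //= mxE expr1n.
        set t := (X in 1 + X); have : 0 <= t by apply: sumr_ge0 => *; exact: sqr_ge0.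
        lra.
      have [h1 _] := Sd T0 T0s x; rewrite key !vnorm_sq in h1.
      have := nsq_ge0 (((I_T R T0)^T *m W)^T *m x); nra.
    rewrite /d0 kappa_of_sq; apply: bigmax_le => // T hT.
    rewrite -opnorm_tr; apply: opnorm_sq_leP => // x.
    have [h1 _] := Sd T hT x; rewrite key !vnorm_sq in h1; nra.
  apply/eqP; rewrite eq_le; apply/andP; split.
    have hlb : has_lbound S by exists d0.
    exact: (ge_inf hlb) d0 Sd0.
  by apply: lb_le_inf => //; exists d0.
have Tz : forall T : {set 'I_n}, (#|T| <= s)%N -> #|T| = 0%N.
  move=> T hT; apply/eqP; rewrite -leqn0 leqNgt; apply/negP => h; apply: noT.
  by exists T; rewrite hT h.
have -> : d0 = 0.
  rewrite /d0 kappa_of_sq; elim/big_ind: _ => // [x y -> ->|T hT].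
    by rewrite maxxx.
  by rewrite opnorm_dim0 ?expr0n // Tz.
have -> : S = setT.
  apply/seteqP; split => // d _ T hT x.
  have x0 : x = 0.
    by apply/matrixP => -[i hi] j; exfalso; rewrite Tz in hi.
  by rewrite x0 mulmx0 !vnorm0 expr2 !mulr0.
apply: inf_out => -[_ [y hy]].
by have := hy (y - 1) I; lra.
Qed.

End Aux6.
Section Aux7.
Variable R : realType.

Lemma dot_abs_le m (u v : 'cV[R]_m) : `|dot u v| <= vnorm u * vnorm v.
Proof.
rewrite -sqrtr_sqr !vnormE -sqrtrM ?nsq_ge0 //.
by rewrite ler_sqrt ?dot_CS // mulr_ge0 ?nsq_ge0.
Qed.

Lemma opnorm_add p q (A B : 'M[R]_(p,q)) : opnorm (A + B) <= opnorm A + opnorm B.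
Proof.
apply: opnorm_leP; first by rewrite addr_ge0 ?opnorm_ge0.
move=> x; rewrite mulmxDl; apply: le_trans (vnormD _ _) _.
by rewrite mulrDl lerD ?opnorm_le.
Qed.

Lemma tr_proj n m (P : 'M[R]_(n,m)) : (1%:M - P *m P^T)^T = 1%:M - P *m P^T.
Proof. by rewrite linearB /= trmx1 trmx_mul trmxK. Qed.

Lemma vnorm_le_nsq m k (u : 'cV[R]_m) (v : 'cV[R]_k) : nsq u <= nsq v -> vnorm u <= vnorm v.
Proof. by move=> h; rewrite !vnormE ler_sqrt ?nsq_ge0. Qed.

Lemma opnorm_row p a b (A : 'M[R]_(p,a)) (B : 'M[R]_(p,b)) :
  opnorm (row_mx A B) ^+ 2 <= opnorm A ^+ 2 + opnorm B ^+ 2.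
Proof.
apply: opnorm_sq_leP; first by rewrite addr_ge0 ?sqr_ge0.
move=> x; rewrite -[x]vsubmxK mul_row_col.
set x1 := usubmx x; set x2 := dsubmx x.
have ex : nsq (col_mx x1 x2) = nsq x1 + nsq x2.
  by rewrite /nsq /dot tr_col_mx mul_row_col mxE.
rewrite ex -!vnorm_sq.
have h1 := vnormD (A *m x1) (B *m x2).
have h2 := opnorm_le A x1; have h3 := opnorm_le B x2.
have := vnorm_ge0 (A *m x1 + B *m x2); have := vnorm_ge0 (A *m x1).
have := vnorm_ge0 (B *m x2); have := vnorm_ge0 x1; have := vnorm_ge0 x2.
have := opnorm_ge0 A; have := opnorm_ge0 B.
set u := vnorm (A *m x1 + B *m x2); set u1 := vnorm (A *m x1); set u2 := vnorm (B *m x2).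
set p1 := vnorm x1; set p2 := vnorm x2; set al := opnorm A; set be := opnorm B.
move=> *.
have h4 : u <= al * p1 + be * p2 := le_trans h1 (lerD h2 h3).
have h5 : u ^+ 2 <= (al * p1 + be * p2) ^+ 2 by nra.
have h6 : (al * p1 + be * p2) ^+ 2 <= (al ^+ 2 + be ^+ 2) * (p1 ^+ 2 + p2 ^+ 2).
  have := sqr_ge0 (al * p2 - be * p1); nra.
lra.
Qed.

Lemma claim1_gen s n a b (P1 : 'M[R]_(n,a)) (P2 : 'M[R]_(n,b)) :
  basis_matrix (row_mx P1 P2) -> basis_matrix P1 -> basis_matrix P2 ->
  kappa s (row_mx P1 P2) ^+ 2
     = \big[Num.max/0]_(T : {set 'I_n} | (#|T| <= s)%N)
         opnorm ((I_T R T)^T *m row_mx P1 P2) ^+ 2 /\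
  kappa s (row_mx P1 P2) ^+ 2 <= kappa s P1 ^+ 2 + kappa s P2 ^+ 2.
Proof.
move=> hP h1 h2; rewrite !kappa_basis // kappa_of_sq; split => //.
apply: bigmax_le; first by rewrite addr_ge0 ?sqr_ge0.
move=> T hT; rewrite mul_mx_row; apply: le_trans (opnorm_row _ _) _.
have := kappa_of_ge P1 hT; have := kappa_of_ge P2 hT.
have := opnorm_ge0 ((I_T R T)^T *m P1); have := opnorm_ge0 ((I_T R T)^T *m P2).
move=> *; nra.
Qed.

Lemma claim2_pt n r (P H : 'M[R]_(n,r)) y : basis_matrix P -> basis_matrix H ->
  nsq (H^T *m y) <= nsq (P^T *m y) + 2 * opnorm ((1%:M - H *m H^T) *m P) * nsq y.
Proof.
move=> hP hH; set z := opnorm ((1%:M - H *m H^T) *m P).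
set Phi := 1%:M - P *m P^T; set Psi := 1%:M - H *m H^T.
have E : H *m H^T *m Phi - Psi *m (P *m P^T) = H *m H^T - P *m P^T.
  rewrite /Phi /Psi mulmxBr mulmx1 mulmxBl mul1mx.
  by rewrite opprB addrA subrK.
have E2 : nsq (H^T *m y) - nsq (P^T *m y)
          = dot y (H *m H^T *m Phi *m y) - dot y (Psi *m (P *m P^T) *m y).
  have e1 : nsq (H^T *m y) = dot y (H *m H^T *m y) by rewrite -mulmxA dot_mulmx.
  have e2 : nsq (P^T *m y) = dot y (P *m P^T *m y) by rewrite -mulmxA dot_mulmx.
  by rewrite e1 e2 -dotBr -mulmxBl -E mulmxBl dotBr.
have t1 : dot y (H *m H^T *m Phi *m y) <= z * nsq y.
  rewrite -!mulmxA dot_mulmx.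
  apply: le_trans (ler_norm _) _; apply: le_trans (dot_abs_le _ _) _.
  have a1 : vnorm (H^T *m y) <= vnorm y by apply: vnorm_le_nsq; exact: basis_tr_nsq.
  have a2 : vnorm (H^T *m (Phi *m y)) <= z * vnorm y.
    rewrite mulmxA -[Phi](tr_proj P) -trmx_mul.
    apply: le_trans (opnorm_le _ _) _; rewrite opnorm_tr ler_wpM2r ?vnorm_ge0 //.
    exact: sin_le.
  rewrite -vnorm_sq expr2 mulrCA.
  have := vnorm_ge0 (H^T *m y); have := vnorm_ge0 (H^T *m (Phi *m y)); have := vnorm_ge0 y.
  move=> *; nra.
have t2 : - dot y (Psi *m (P *m P^T) *m y) <= z * nsq y.
  apply: le_trans (_ : _ <= `|dot y (Psi *m (P *m P^T) *m y)|) _.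
    by rewrite -normrN ler_norm.
  apply: le_trans (dot_abs_le _ _) _.
  have a1 : vnorm (P^T *m y) <= vnorm y by apply: vnorm_le_nsq; exact: basis_tr_nsq.
  have a2 : vnorm (Psi *m (P *m P^T) *m y) <= z * vnorm y.
    rewrite !mulmxA -(mulmxA _ P^T); apply: le_trans (opnorm_le _ _) _.
    by rewrite ler_wpM2l ?opnorm_ge0.
  rewrite -vnorm_sq expr2 mulrCA.
  have := vnorm_ge0 (Psi *m (P *m P^T) *m y); have := vnorm_ge0 y.
  move=> *; nra.
have := E2; lra.
Qed.

End Aux7.
Section Aux8.
Variable R : realType.

Lemma claim2_gen s n r (P H : 'M[R]_(n,r)) : basis_matrix P -> basis_matrix H ->
  kappa_of s H ^+ 2 <= kappa_of s P ^+ 2 + 2 * opnorm ((1%:M - H *m H^T) *m P).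
Proof.
move=> hP hH; set z := opnorm ((1%:M - H *m H^T) *m P).
have z0 : 0 <= z := opnorm_ge0 _.
rewrite kappa_of_sq; apply: bigmax_le; first by rewrite addr_ge0 ?sqr_ge0 ?mulr_ge0.
move=> T hT; rewrite -opnorm_tr trmx_mul trmxK.
apply: (@le_trans _ _ (opnorm (P^T *m I_T R T) ^+ 2 + 2 * z)).
  apply: opnorm_sq_leP; first by rewrite addr_ge0 ?sqr_ge0 ?mulr_ge0.
  move=> x; rewrite -mulmxA; apply: le_trans (claim2_pt _ hP hH) _.
  rewrite (basis_nsq x (I_T_basis R T)) [X in _ <= X]mulrDl lerD2r mulmxA.
  exact: opnorm_sq_le.
rewrite lerD2r -[P^T *m _]trmxK trmx_mul trmxK opnorm_tr.
have := kappa_of_ge P hT; have := opnorm_ge0 ((I_T R T)^T *m P); nra.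
Qed.

Lemma claim3_gen s n r c (Ps H : 'M[R]_(n,r)) (P Q : 'M[R]_(n,c)) :
  basis_matrix Ps -> basis_matrix H -> basis_matrix P -> basis_matrix Q ->
  P^T *m Ps = 0 ->
  kappa_of s Q <= kappa_of s P
     + kappa s ((1%:M - P *m P^T) *m Q) * opnorm ((1%:M - H *m H^T - Q *m Q^T) *m P)
     + opnorm ((1%:M - H *m H^T) *m Ps).
Proof.
move=> hPs hH hP hQ orth.
set zk := opnorm ((1%:M - H *m H^T - Q *m Q^T) *m P).
set zs := opnorm ((1%:M - H *m H^T) *m Ps).
set kt := kappa s ((1%:M - P *m P^T) *m Q).
have zk0 : 0 <= zk := opnorm_ge0 _.
have zs0 : 0 <= zs := opnorm_ge0 _.
have kt0 : 0 <= kt := kappa_ge0 _ _.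
have kt1 : kt <= 1 := kappa_le1 _ _.
have kP0 := kappa_of_ge0 s P.
have trP : Ps^T *m P = 0 by rewrite -(trmxK (Ps^T *m P)) trmx_mul trmxK orth trmx0.
have hPhiQ : opnorm ((1%:M - P *m P^T) *m Q) <= zk + zs.
  apply: le_trans (sin_le hP hQ) _.
  have -> : (1%:M - Q *m Q^T) *m P
            = (1%:M - H *m H^T - Q *m Q^T) *m P + H *m (H^T *m P).
    by rewrite mulmxA -mulmxDl addrAC subrK.
  apply: le_trans (opnorm_add _ _) _; rewrite lerD2l.
  apply: le_trans (opnorm_mul_le _ _) _; rewrite -[zs]mul1r.
  apply: ler_pM; [exact: opnorm_ge0|exact: opnorm_ge0|exact: opnorm_basis hH|].
  have -> : H^T *m P = H^T *m ((1%:M - Ps *m Ps^T) *m P).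
    by rewrite mulmxBl mul1mx -mulmxA trP mulmx0 subr0.
  rewrite mulmxA; apply: le_trans (opnorm_mul_le _ _) _; rewrite -[zs]mulr1.
  apply: ler_pM; [exact: opnorm_ge0|exact: opnorm_ge0| |exact: opnorm_basis hP].
  rewrite -(tr_proj Ps) -trmx_mul opnorm_tr; exact: sin_le hPs hH.
apply: kappa_of_le; first by rewrite !addr_ge0 ?mulr_ge0.
move=> T hT.
have -> : (I_T R T)^T *m Q
    = (I_T R T)^T *m P *m (P^T *m Q) + (I_T R T)^T *m ((1%:M - P *m P^T) *m Q).
  by rewrite -mulmxA -mulmxDr mulmxBl mul1mx !mulmxA addrC subrK.
apply: le_trans (opnorm_add _ _) _.
have a1 : opnorm ((I_T R T)^T *m P *m (P^T *m Q)) <= kappa_of s P.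
  apply: le_trans (opnorm_mul_le _ _) _; rewrite -[X in _ <= X]mulr1.
  apply: ler_pM; [exact: opnorm_ge0|exact: opnorm_ge0|exact: kappa_of_ge|].
  apply: le_trans (opnorm_mul_le _ _) _; rewrite -[1]mulr1.
  by apply: ler_pM; rewrite ?opnorm_ge0 ?opnorm_basis_tr ?opnorm_basis.
have a2 := kappa_gen ((1%:M - P *m P^T) *m Q) hT.
rewrite -/kt in a2.
have := opnorm_ge0 ((1%:M - P *m P^T) *m Q).
move=> *; nra.
Qed.

Lemma basis_row n r c (H : 'M[R]_(n,r)) (Q : 'M[R]_(n,c)) :
  basis_matrix H -> basis_matrix Q -> Q^T *m H = 0 -> basis_matrix (row_mx H Q).
Proof.
move=> hH hQ o; rewrite /basis_matrix tr_row_mx mul_col_row hH hQ o.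
have -> : H^T *m Q = 0 by rewrite -(trmxK (H^T *m Q)) trmx_mul trmxK o trmx0.
by rewrite -scalar_mx_block.
Qed.

End Aux8.
Theorem lemma9 (R : realType) (n J K s : nat) (r c : 'I_J -> nat)
  (Pstar : forall j : 'I_J, 'M[R]_(n, r j))
  (Pnew : forall j : 'I_J, 'M[R]_(n, c j))
  (Phstar : forall j : 'I_J, 'M[R]_(n, r j))
  (Phnew : forall (j : 'I_J) (k : 'I_K), 'M[R]_(n, c j))
  (hPstar : forall j, basis_matrix (Pstar j))
  (hPnew : forall j, basis_matrix (Pnew j))
  (hPnew_orth : forall j, (Pnew j)^T *m Pstar j = 0)
  (hPhstar : forall j, basis_matrix (Phstar j))
  (hPhnew : forall j k, basis_matrix (Phnew j k))
  (hPhnew_orth : forall j k, (Phnew j k)^T *m Phstar j = 0) :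
  let kappa_star := \big[Num.max/0]_(j : 'I_J) kappa s (Pstar j) in
  let kappa_new := \big[Num.max/0]_(j : 'I_J) kappa s (Pnew j) in
  let kappa_tilde (k : 'I_K) := \big[Num.max/0]_(j : 'I_J)
        kappa s ((1%:M - Pnew j *m (Pnew j)^T) *m Phnew j k) in
  (* Claim 1 *)
  (forall (m a b : nat) (P1 : 'M[R]_(m, a)) (P2 : 'M[R]_(m, b)),
     basis_matrix (row_mx P1 P2) -> basis_matrix P1 -> basis_matrix P2 ->
     kappa s (row_mx P1 P2) ^+ 2
       = \big[Num.max/0]_(T : {set 'I_m} | (#|T| <= s)%N)
           opnorm ((I_T R T)^T *m row_mx P1 P2) ^+ 2 /\
     kappa s (row_mx P1 P2) ^+ 2 <= kappa s P1 ^+ 2 + kappa s P2 ^+ 2) /\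
  (forall (j : 'I_J) (k : 'I_K),
     let Ps := Pstar j in
     let Phs := Phstar j in
     let Pn := Pnew j in
     let Phn := Phnew j k in
     let zeta_star := opnorm ((1%:M - Phs *m Phs^T) *m Ps) in
     let zeta_k := opnorm ((1%:M - Phs *m Phs^T - Phn *m Phn^T) *m Pn) in
     let Phi0 := (1%:M - Phs *m Phs^T : 'M[R]_n) in
     let Phik := (1%:M - Phs *m Phs^T - Phn *m Phn^T : 'M[R]_n) in
     (* Claim 2 *)
     kappa s Phs ^+ 2 <= kappa_star ^+ 2 + 2 * zeta_star /\
     (* Claim 3 *)
     kappa s Phn <= kappa_new + kappa_tilde k * zeta_k + zeta_star /\
     (* Claim 4 *)
     delta s Phi0 = kappa s Phs ^+ 2 /\
     kappa s Phs ^+ 2 <= kappa_star ^+ 2 + 2 * zeta_star /\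
     (* Claim 5 *)
     delta s Phik = kappa s (row_mx Phs Phn) ^+ 2 /\
     kappa s (row_mx Phs Phn) ^+ 2 <= kappa s Phs ^+ 2 + kappa s Phn ^+ 2 /\
     kappa s Phs ^+ 2 + kappa s Phn ^+ 2
       <= kappa_star ^+ 2 + 2 * zeta_star
          + (kappa_new + kappa_tilde k * zeta_k + zeta_star) ^+ 2).
Proof.
move=> kappa_star kappa_new kappa_tilde.
split.
  by move=> m a b P1 P2 hP h1 h2; exact: claim1_gen.
move=> j k Ps Phs Pn Phn zeta_star zeta_k Phi0 Phik.
have kst : kappa s Ps <= kappa_star.
  exact: (le_bigmax 0 (fun j => kappa s (Pstar j)) j).
have kst0 : 0 <= kappa s Ps := kappa_ge0 _ _.
have knw : kappa s Pn <= kappa_new.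
  exact: (le_bigmax 0 (fun j => kappa s (Pnew j)) j).
have ktl : kappa s ((1%:M - Pn *m Pn^T) *m Phn) <= kappa_tilde k.
  exact: (le_bigmax 0 (fun j => kappa s ((1%:M - Pnew j *m (Pnew j)^T) *m Phnew j k)) j).
have zk0 : 0 <= zeta_k := opnorm_ge0 _.
have zs0 : 0 <= zeta_star := opnorm_ge0 _.
have C2 : kappa s Phs ^+ 2 <= kappa_star ^+ 2 + 2 * zeta_star.
  rewrite (kappa_basis s (hPhstar j)).
  apply: le_trans (claim2_gen s (hPstar j) (hPhstar j)) _.
  rewrite lerD2r -(kappa_basis s (hPstar j)) -/Ps; nra.
have C3 : kappa s Phn <= kappa_new + kappa_tilde k * zeta_k + zeta_star.
  rewrite (kappa_basis s (hPhnew j k)).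
  apply: le_trans (claim3_gen s (hPstar j) (hPhstar j) (hPnew j) (hPhnew j k) (hPnew_orth j)) _.
  rewrite -(kappa_basis s (hPnew j)) -/Pn -/Phn -/Phs -/Ps -/zeta_k -/zeta_star.
  rewrite lerD2r lerD //; rewrite ler_wpM2r //.
have hW := basis_row (hPhstar j) (hPhnew j k) (hPhnew_orth j k).
have eW : Phik = 1%:M - row_mx Phs Phn *m (row_mx Phs Phn)^T.
  by rewrite /Phik tr_row_mx mul_row_col opprD addrA.
have [_ C1] := claim1_gen s hW (hPhstar j) (hPhnew j k).
do 6?split => //.
- by rewrite /Phi0 delta_proj // kappa_basis.
- by rewrite eW delta_proj // kappa_basis.
- have := kappa_ge0 s Phn; move=> h; nra.
Qed.
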